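(* For every integer $n\geq 2$, both $d(n)$ and $-\frac{d(n)}{n-1}$ are eigenvalues of the adjacency matrix of the permutation graph $P(n)$.
   Context: $d(n)$ is the number of derangements (fixed-point-free permutations) of $\{1,\dots,n\}$. The permutation graph $P(n)$ has vertex set $S(n)$, and $\pi,\sigma$ are adjacent iff $\pi(i)\neq\sigma(i)$ for all $i$. *)

(* Defs.v *)
From HB Require Import structures.
From mathcomp Require Import all_boot all_order all_algebra all_fingroup.
Set Implicit Arguments. Unset Strict Implicit. Unset Printing Implicit Defensive.
Import GRing.Theory Num.Theory.

Definition derangements (n : nat) : nat :=
  #|[set s : 'S_n | [forall i, s i != i]]|.

Definition perm_adj (n : nat) (p q : 'S_n) : bool := [forall i, p i != q i].

Definition nverts (n : nat) : nat := #|{perm 'I_n}|.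

Definition perm_graph_adj (R : nzRingType) (n : nat) : 'M[R]_(nverts n) :=
  \matrix_(i, j) ((perm_adj (enum_val i) (enum_val j))%:R)%R.

(* Main.v *)
Require Import Defs.
From HB Require Import structures.
From mathcomp Require Import all_boot all_order all_algebra all_fingroup.
Import GRing.Theory Num.Theory.
Local Open Scope ring_scope.

Lemma mulA_row (R : nzRingType) n (F : 'S_n -> R) :
  (\row_(i < nverts n) F (enum_val i)) *m perm_graph_adj R n =
  \row_(j < nverts n) \sum_(s : 'S_n | [forall i, s i != i]) F (s * enum_val j)%g.
Proof.
apply/rowP => j; rewrite !mxE.
set q := enum_val j.
rewrite (eq_bigr (fun i : 'I_(nverts n) => (fun p => F p * (perm_adj p q)%:R) (enum_val i))); last first.
  by move=> i _; rewrite !mxE.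
rewrite -(big_enum_val (A := predT) (fun p => F p * (perm_adj p q)%:R)) /=.
rewrite (reindex (fun s => s * q)%g) /=; last first.
  by exists (fun p => p * q^-1)%g => s _; rewrite ?mulgK ?mulgKV.
rewrite [RHS]big_mkcond /=; apply: eq_bigr => s _.
have -> : perm_adj (s * q)%g q = [forall i, s i != i].
  apply/forallP/forallP => H i; have := H i; rewrite permM;
   by rewrite (inj_eq perm_inj).
by case: ifP; rewrite ?mulr1 ?mulr0.
Qed.

Definition C m (k : 'I_m.+1) := #|[set s : 'S_m.+1 | [forall i, s i != i] & s ord0 == k]|.
Arguments C {m}.
Lemma Cle m (k k' : 'I_m.+1) : k != ord0 -> k' != ord0 -> (C k <= C k')%N.
Proof.
move=> hk hk'; rewrite /C; set t := tperm k k'.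
rewrite -(card_imset _ (conjg_inj t)).
apply/subset_leq_card/subsetP => x /imsetP [s Hs ->].
move: Hs; rewrite !inE => /andP [/forallP Hd /eqP H0].
apply/andP; split.
  apply/forallP => i; rewrite -{1 2}(tpermK k k' i) permJ.
  by rewrite (inj_eq perm_inj) Hd.
have t0 : t ord0 = ord0 by rewrite /t tpermD // eq_sym.
by rewrite -{1}t0 permJ H0 /t tpermL.
Qed.

Lemma Ccount m (k : 'I_m.+2) : k != ord0 ->
  derangements m.+2 = (m.+1 * C k)%N.
Proof.
move=> hk.
rewrite /derangements -sum1_card.
rewrite (partition_big (fun s : 'S_m.+2 => s ord0) predT) //=.
rewrite (bigD1 ord0) //= big1; last first.
  by move=> s; rewrite inE => /andP [/forallP H /eqP e]; have := H ord0; rewrite e eqxx.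
rewrite add0n.
rewrite (eq_bigr (fun _ => C k)); last first.
  move=> j hj; rewrite sum1dep_card /C; apply/eqP; rewrite eqn_leq.
  have -> : [set x in [set s : 'S_m.+2 | [forall i, s i != i]] | x ord0 == j] =
     [set s : 'S_m.+2 | [forall i, s i != i] & s ord0 == j].
    by apply/setP => s; rewrite !inE.
  by change (C j <= C k <= C j)%N; rewrite (@Cle _ _ _ hj hk) (@Cle _ _ _ hk hj).
rewrite (eq_bigl (fun i => i \in predC1 ord0)) // sum_nat_const cardC1 card_ord.
by [].
Qed.

Lemma sum_der (R : nzRingType) m (x : R) :
  \sum_(s : 'S_m | [forall i, s i != i]) x = x *+ derangements m.
Proof.
rewrite /derangements cardsE -sumr_const; apply: eq_bigl => s; by [].
Qed.

Theorem lemma7 (R : numFieldType) (n : nat) (hn : (2 <= n)%N) :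
  eigenvalue (perm_graph_adj R n) (derangements n)%:R /\
  eigenvalue (perm_graph_adj R n) (- ((derangements n)%:R / (n.-1)%:R)).
Proof.
case: n hn => [|[|m]] // _.
have nz : forall (F : 'S_m.+2 -> R), F 1%g != 0 ->
    (\row_(i < nverts m.+2) F (enum_val i)) != 0.
  move=> F hF; apply/eqP => /rowP /(_ (enum_rank 1%g)); rewrite !mxE enum_rankK.
  by move/eqP; rewrite (negbTE hF).
split.
  apply/eigenvalueP; exists (\row_(i < nverts m.+2) (fun _ : 'S_m.+2 => 1 : R) (enum_val i)).
    rewrite (@mulA_row _ _ (fun _ : 'S_m.+2 => 1 : R)); apply/rowP => j; rewrite !mxE sum_der.
    by rewrite mulr1 -mulr_natr mul1r.
  by apply: (nz (fun _ => 1)); rewrite oner_eq0.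
set n := m.+2.
have nn0 : (n%:R : R) != 0 by rewrite pnatr_eq0.
have an0 : (m.+1%:R : R) != 0 by rewrite pnatr_eq0.
apply/eigenvalueP; exists (\row_(i < nverts m.+2) (fun p : 'S_m.+2 => ((p ord0 == ord0)%:R - n%:R^-1 : R)) (enum_val i)); last first.
  apply: (nz (fun p : 'S_m.+2 => ((p ord0 == ord0)%:R - n%:R^-1 : R))); rewrite perm1 eqxx subr_eq0 eq_sym invr_eq1 pnatr_eq1.
  by [].
rewrite (@mulA_row _ _ (fun p : 'S_m.+2 => ((p ord0 == ord0)%:R - n%:R^-1 : R))); apply/rowP => j; rewrite !mxE.
set q := enum_val j.
rewrite sumrB sum_der.
have hsum : forall s : 'S_m.+2, ((s * q)%g ord0 == ord0) = (s ord0 == q^-1%g ord0).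
  by move=> s; rewrite permM -(inj_eq (@perm_inj _ q^-1%g)) permK.
under eq_bigr => s _ do rewrite hsum.
rewrite -[_ *+ derangements _]mulr_natr.
have e1 : (1 - n%:R^-1 : R) = m.+1%:R / n%:R.
  by apply: (mulIf nn0); rewrite mulrBl mul1r mulfVK // mulVf // mulrSr addrK.
case: (boolP (q ord0 == ord0)) => hq.
  have hq' : q^-1%g ord0 = ord0 by rewrite -{1}(eqP hq) permK.
  rewrite big1 ?sub0r; last first.
    move=> s /forallP H; rewrite hq'; have := H ord0; by case: (s ord0 == ord0).
  rewrite /= e1 mulNr; congr (- _).
  by rewrite mulrA mulfVK // mulrC.
have hk : q^-1%g ord0 != ord0.
  by apply: contra hq => /eqP e; rewrite -[X in q X]e permKV.
rewrite (@Ccount _ _ hk) /= sub0r.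
have -> : \sum_(i : 'S_m.+2 | [forall i0, i i0 != i0]) (i ord0 == q^-1%g ord0)%:R = (C (q^-1%g ord0))%:R :> R.
  rewrite /C cardsE -sum1_card natr_sum [RHS]big_mkcond [LHS]big_mkcond; apply: eq_bigr => s _ /=.
  rewrite unfold_in /=; by case: [forall i, s i != i]; case: (s ord0 == _).
set c := (C _)%:R.
rewrite natrM -/c mulNr mulrN opprK (mulrC m.+1%:R) mulfK // (mulrC c) mulrA (mulrC n%:R^-1) -e1.
by rewrite mulrBl mul1r opprB addrC subrK mulrC.
Qed.
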